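(* If $M$ is a uniformly dense loopless matroid containing a circuit, then $\operatorname{gir}(M)\ge\rho(M)/(\rho(M)-1)$.
   Context: For a matroid on $E$, $\operatorname{rank}(A)=\max_B|A\cap B|$ over bases, $\rho(A)=|A|/\operatorname{rank}(A)$, $\rho(M)=\rho(E)$; $M$ is uniformly dense if $\rho(A)\le\rho(E)$ for all nonempty $A\subseteq E$. A circuit is a subset $C\subseteq E$ with $\operatorname{rank}(C)=|C|-1$ and $\operatorname{rank}(S)=|S|$ for every proper subset $S\subset C$; $\operatorname{gir}(M)$ is the size of a smallest circuit. *)

(* Defs.v *)
From mathcomp Require Import all_boot all_order all_algebra.
Set Implicit Arguments. Unset Strict Implicit. Unset Printing Implicit Defensive.
Import Order.TTheory GRing.Theory Num.Theory.

Record matroid (T : finType) := Matroid {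
  bases : {set {set T}};
  bases_nonempty : bases != set0;
  bases_exchange : forall B1 B2, B1 \in bases -> B2 \in bases ->
    forall x, x \in B1 :\: B2 ->
      exists2 y, y \in B2 :\: B1 & (y |: (B1 :\ x)) \in bases
}.

Section MatroidDefs.
Variables (T : finType) (M : matroid T).

Definition rank (A : {set T}) : nat := \max_(B in bases M) #|A :&: B|.

Definition rho (A : {set T}) : rat := (#|A|%:R / (rank A)%:R)%R.

Definition rhoM : rat := rho [set: T].

Definition uniformly_dense : Prop :=
  forall A : {set T}, A != set0 -> (rho A <= rhoM)%R.

Definition circuit (C : {set T}) : bool :=
  (rank C + 1 == #|C|) &&
  [forall S : {set T}, (S \proper C) ==> (rank S == #|S|)].

Definition loopless : Prop := forall e : T, ~ circuit [set e].

(* girth: the size of a smallest circuit (default #|T|.+1 if none) *)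
Definition gir : nat :=
  \big[minn/#|T|.+1]_(C : {set T} | circuit C) #|C|.

End MatroidDefs.

(* Main.v *)
Require Import Defs.
From mathcomp Require Import all_boot all_order all_algebra.
From mathcomp Require Import lra.
Import Order.TTheory GRing.Theory Num.Theory.

Lemma circ_bound (T : finType) (M : matroid T) (C : {set T}) :
  uniformly_dense M -> loopless M -> circuit M C ->
  (rhoM M / (rhoM M - 1) <= (#|C|)%:R)%R.
Proof.
move=> ud ll cC.
have cC' := cC.
move/andP: cC' => [/eqP hr _].
have C0 : C != set0.
  apply/negP => /eqP E; move: hr; rewrite E cards0; by rewrite addn1.
have r1 : 0 < rank M C.
  rewrite lt0n; apply/negP => /eqP r0.
  move: hr; rewrite r0 add0n => /esym/eqP/cards1P [e E].
  by apply: (ll e); rewrite -E.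
have := ud C C0; rewrite /rho -hr.
set rho := rhoM M.
have : (0 < (rank M C)%:R :> rat)%R by rewrite ltr0n.
move: (rank M C) => r rpos.
rewrite natrD ler_pdivrMr // => H.
have rg : (0 < rho - 1)%R by nra.
rewrite ler_pdivrMr //. nra.
Qed.

Theorem proposition3p9 (T : finType) (M : matroid T) :
  uniformly_dense M -> loopless M ->
  (exists C : {set T}, circuit M C) ->
  (rhoM M / (rhoM M - 1) <= (gir M)%:R)%R.
Proof.
move=> ud ll [C0 cC0].
rewrite /gir.
apply: (big_ind (fun x : nat => (rhoM M / (rhoM M - 1) <= x%:R)%R)).
- have h := @circ_bound _ _ _ ud ll cC0; apply: (le_trans h).
  by rewrite ler_nat; apply: leq_trans (max_card _) _; exact: leqnSn.
- by move=> x y hx hy; case: (leqP x y).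
- move=> C cC; exact: (@circ_bound _ _ _ ud ll cC).
Qed.
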